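(* Let $X$ be a type variable, $A$ and $G$ types of system $\mathcal F$, $O$ a type constant and $\alpha$ a term variable. Then $\alpha:O\vdash_{\mathcal F} T_A : A[G/X]\rightarrow A[G^o/X]$ and $\alpha:O\vdash_{\mathcal F} T'_A : A[G^o/X]\rightarrow A[G/X]$.
   Context: Types of system $\mathcal F$ are built from type variables and type constants (atomic, not quantifiable; $O$ is one) with $\rightarrow$, $\forall$; $A[G/X]$ is capture-avoiding substitution. Typing: (ax) $\Gamma \vdash x_i : A_i$ for $x_i:A_i\in\Gamma$; ($\rightarrow_i$) from $\Gamma, x:B \vdash t : C$ infer $\Gamma \vdash \lambda x t : B \rightarrow C$; ($\rightarrow_e$) from $\Gamma \vdash u : B\rightarrow C$, $\Gamma \vdash v : B$ infer $\Gamma \vdash (u)v : C$; ($\forall_i$) from $\Gamma \vdash t : A$, $Y$ not free in $\Gamma$, infer $\Gamma \vdash t : \forall Y A$; ($\forall_e$) from $\Gamma \vdash t : \forall Y A$ infer $\Gamma \vdash t : A[C/Y]$. For types $A,B$: $A\wedge B=\forall Z\{(A\rightarrow(B\rightarrow Z))\rightarrow Z\}$ ($Z$ not free in $A,B$), and $G^o$ denotes $O\rightarrow G\wedge O$. Let $\mathbf 1=\lambda x\lambda y\,x$. For a type $F$, the $\lambda$-terms $T_F,T'_F$ (depending on the fixed $X$ and $\alpha$; bound variables $x,y,\beta,g$ chosen distinct from $\alpha$) are defined by induction on $F$: if $X$ is not free in $F$, $T_F=T'_F=\lambda x\,x$; otherwise, if $F=X$, $T_F=\lambda x\lambda\beta\lambda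 g\,(g)x\alpha$ and $T'_F=\lambda x\,(x)\alpha\mathbf 1$; if $F=C\rightarrow D$, $T_F=\lambda x\lambda y\,(T_D)(x)(T'_C)y$ and $T'_F=\lambda x\lambda y\,(T'_D)(x)(T_C)y$; if $F=\forall Y B$, $T_F=\lambda x\,(T_B)x$ and $T'_F=\lambda x\,(T'_B)x$. *)

(* Defs.v *)
(* System F (Curry style) with de Bruijn indices for TYPE
   variables and named TERM variables. *)
From Stdlib Require Import Arith List.
Import ListNotations.

(* Types: type variables (de Bruijn indices), type constants (atomic,
   labelled by nat, not quantifiable), arrow, universal quantification. *)
Inductive ty : Type :=
  | TVar : nat -> ty
  | TConst : nat -> ty
  | TArr : ty -> ty -> ty
  | TAll : ty -> ty.

Fixpoint shift_ty (c : nat) (A : ty) : ty :=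
  match A with
  | TVar n => if Nat.ltb n c then TVar n else TVar (S n)
  | TConst k => TConst k
  | TArr B C => TArr (shift_ty c B) (shift_ty c C)
  | TAll B => TAll (shift_ty (S c) B)
  end.

(* A[G/X] for a free variable X: replace the free variable X by G (capture
   avoiding, since G is lifted under binders); other free variables are
   untouched (exactly as named substitution). *)
Fixpoint subst_ty (X : nat) (G : ty) (A : ty) : ty :=
  match A with
  | TVar n => if Nat.eqb n X then G else TVar n
  | TConst k => TConst k
  | TArr B C => TArr (subst_ty X G B) (subst_ty X G C)
  | TAll B => TAll (subst_ty (S X) (shift_ty 0 G) B)
  end.

(* B[C/Y] in rule (forall_e) is
   open_ty 0 C B. *)
Fixpoint open_ty (k : nat) (C : ty) (A : ty) : ty :=
  match A with
  | TVar n => if Nat.eqb n k then C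
              else if Nat.ltb n k then TVar n else TVar (pred n)
  | TConst c => TConst c
  | TArr B D => TArr (open_ty k C B) (open_ty k C D)
  | TAll B => TAll (open_ty (S k) (shift_ty 0 C) B)
  end.

Fixpoint free_in (X : nat) (A : ty) : bool :=
  match A with
  | TVar n => Nat.eqb n X
  | TConst _ => false
  | TArr B C => free_in X B || free_in X C
  | TAll B => free_in (S X) B
  end.

(* A /\ B = forall Z ((A -> (B -> Z)) -> Z), Z not free in A, B. *)
Definition ty_and (A B : ty) : ty :=
  TAll (TArr (TArr (shift_ty 0 A) (TArr (shift_ty 0 B) (TVar 0))) (TVar 0)).

(* G^o = O -> G /\ O, where O is the type constant with label o. *)
Definition ty_o (o : nat) (G : ty) : ty :=
  TArr (TConst o) (ty_and G (TConst o)).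

Inductive term : Type :=
  | Var : nat -> term
  | Lam : nat -> term -> term
  | App : term -> term -> term.

(* Contexts: lists of declarations, most recent first; Gamma, x:B is
   (x,B) :: Gamma (a new declaration of x shadows older ones). *)
Definition ctx := list (nat * ty).

Fixpoint lookup (x : nat) (Gamma : ctx) : option ty :=
  match Gamma with
  | [] => None
  | (y, A) :: Gamma' => if Nat.eqb x y then Some A else lookup x Gamma'
  end.

Definition shift_ctx (Gamma : ctx) : ctx :=
  map (fun p => (fst p, shift_ty 0 (snd p))) Gamma.

(* With de Bruijn indices, rule (forall_i)
   "Y not free in Gamma" becomes: the premise is typed in the context with
   all free type variables lifted (so index 0 is fresh for it). *)
Inductive typing : ctx -> term -> ty -> Prop :=
  | T_ax : forall Gamma x A, lookup x Gamma = Some A -> typing Gamma (Var x) A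
  | T_arr_i : forall Gamma x t B C,
      typing ((x, B) :: Gamma) t C -> typing Gamma (Lam x t) (TArr B C)
  | T_arr_e : forall Gamma u v B C,
      typing Gamma u (TArr B C) -> typing Gamma v B -> typing Gamma (App u v) C
  | T_all_i : forall Gamma t A,
      typing (shift_ctx Gamma) t A -> typing Gamma t (TAll A)
  | T_all_e : forall Gamma t A C,
      typing Gamma t (TAll A) -> typing Gamma t (open_ty 0 C A).

Definition one (x y : nat) : term := Lam x (Lam y (Var x)).

Definition idt (x : nat) : term := Lam x (Var x).

Fixpoint TT (alpha x y beta g : nat) (X : nat) (F : ty) : term * term :=
  if negb (free_in X F) then (idt x, idt x) else
  match F with
  | TVar _ =>
      (Lam x (Lam beta (Lam g (App (App (Var g) (Var x)) (Var alpha)))),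
       Lam x (App (App (Var x) (Var alpha)) (one x y)))
  | TConst _ => (idt x, idt x)
  | TArr C D =>
      let (TC, T'C) := TT alpha x y beta g X C in
      let (TD, T'D) := TT alpha x y beta g X D in
      (Lam x (Lam y (App TD (App (Var x) (App T'C (Var y))))),
       Lam x (Lam y (App T'D (App (Var x) (App TC (Var y))))))
  | TAll B =>
      let (TB, T'B) := TT alpha x y beta g (S X) B in
      (Lam x (App TB (Var x)), Lam x (App T'B (Var x)))
  end.

(* Main.v *)
Require Import Defs.
From Stdlib Require Import List Arith Lia.
Import ListNotations.

Lemma shift_comm : forall A c c', c' <= c ->
  shift_ty (S c) (shift_ty c' A) = shift_ty c' (shift_ty c A).
Proof.
  induction A; intros c c' H; simpl.
  - destruct (Nat.ltb_spec n c'); destruct (Nat.ltb_spec n c); simpl;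
    repeat (match goal with |- context [Nat.ltb ?a ?b] => destruct (Nat.ltb_spec a b) end);
    try reflexivity; lia.
  - reflexivity.
  - rewrite IHA1, IHA2; auto.
  - rewrite IHA; auto; lia.
Qed.

Lemma open_shift : forall A k C, open_ty k C (shift_ty k A) = A.
Proof.
  induction A; intros k C; simpl.
  - destruct (Nat.ltb_spec n k); cbn -[Nat.eqb Nat.ltb].
    + destruct (Nat.eqb_spec n k); [lia|]. destruct (Nat.ltb_spec n k); [reflexivity|lia].
    + destruct (Nat.eqb_spec (S n) k); [lia|]. destruct (Nat.ltb_spec (S n) k); [lia|reflexivity].
  - reflexivity.
  - rewrite IHA1, IHA2; auto.
  - rewrite IHA; auto.
Qed.

Lemma open_var_shift : forall A k, open_ty k (TVar k) (shift_ty (S k) A) = A.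
Proof.
  induction A; intros k; simpl.
  - destruct (Nat.ltb_spec n (S k)); cbn -[Nat.eqb Nat.ltb].
    + destruct (Nat.eqb_spec n k); [subst; reflexivity|]. destruct (Nat.ltb_spec n k); [reflexivity|lia].
    + destruct (Nat.eqb_spec (S n) k); [lia|]. destruct (Nat.ltb_spec (S n) k); [lia|reflexivity].
  - reflexivity.
  - rewrite IHA1, IHA2; auto.
  - simpl. rewrite IHA; auto.
Qed.

Lemma subst_notfree : forall A X G, free_in X A = false -> subst_ty X G A = A.
Proof.
  induction A; intros X G H; simpl in *.
  - rewrite H; reflexivity.
  - reflexivity.
  - apply Bool.orb_false_iff in H; destruct H. rewrite IHA1, IHA2; auto.
  - rewrite IHA; auto.
Qed.

Lemma lookup_shift : forall a Gm, lookup a (shift_ctx Gm) = option_map (shift_ty 0) (lookup a Gm).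
Proof.
  induction Gm as [|[b B] Gm IH]; simpl; auto.
  destruct (a =? b); simpl; auto.
Qed.

Lemma shift_ty_o : forall o G, shift_ty 0 (ty_o o G) = ty_o o (shift_ty 0 G).
Proof.
  intros. unfold ty_o, ty_and. simpl. rewrite shift_comm by lia. reflexivity.
Qed.

Ltac lk := apply T_ax; simpl;
  repeat match goal with |- context [Nat.eqb ?a ?b] =>
    destruct (Nat.eqb_spec a b); try reflexivity; try congruence end; try assumption.

Lemma main (o alpha x y beta g : nat)
  (d1 : alpha <> x) (d2 : alpha <> y) (d3 : alpha <> beta) (d4 : alpha <> g)
  (d5 : x <> y) (d6 : x <> beta) (d7 : x <> g) (d8 : y <> beta) (d9 : y <> g)
  (d10 : beta <> g) :
  forall A X G Gm, lookup alpha Gm = Some (TConst o) ->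
  typing Gm (fst (TT alpha x y beta g X A))
    (TArr (subst_ty X G A) (subst_ty X (ty_o o G) A)) /\
  typing Gm (snd (TT alpha x y beta g X A))
    (TArr (subst_ty X (ty_o o G) A) (subst_ty X G A)).
Proof.
  induction A; intros X G Gm HG; cbn [TT];
  (match goal with |- context [free_in X ?F] => destruct (free_in X F) eqn:Hf end;
   [simpl negb; cbv iota | simpl negb; cbv iota;
    rewrite !subst_notfree by exact Hf; split; simpl; apply T_arr_i; lk]).
  - simpl in Hf. apply Nat.eqb_eq in Hf. subst n. simpl. rewrite Nat.eqb_refl.
    split; simpl.
    + apply T_arr_i. apply T_arr_i. unfold ty_and. apply T_all_i. simpl.
      apply T_arr_i.
      eapply T_arr_e; [eapply T_arr_e|].
      * lk.
      * apply T_ax. simpl.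
        repeat match goal with |- context [Nat.eqb ?a ?b] =>
          destruct (Nat.eqb_spec a b); try congruence end.
      * apply T_ax. simpl.
        repeat match goal with |- context [Nat.eqb ?a ?b] =>
          destruct (Nat.eqb_spec a b); try congruence end.
        rewrite lookup_shift, HG. reflexivity.
    + apply T_arr_i.
      eapply T_arr_e.
      * pose proof (T_all_e ((x, ty_o o G) :: Gm) (App (Var x) (Var alpha))
          (TArr (TArr (shift_ty 0 G) (TArr (shift_ty 0 (TConst o)) (TVar 0))) (TVar 0)) G) as H.
        simpl in H. rewrite open_shift in H. apply H.
        eapply T_arr_e; [lk|lk].
      * unfold one. apply T_arr_i. apply T_arr_i. lk.
  - discriminate.
  - simpl in Hf.
    destruct (TT alpha x y beta g X A1) as [TC T'C] eqn:E1.
    destruct (TT alpha x y beta g X A2) as [TD T'D] eqn:E2.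
    simpl.
    assert (HG2 : forall B C, lookup alpha ((y, B) :: (x, C) :: Gm) = Some (TConst o)).
    { intros. simpl. destruct (Nat.eqb_spec alpha y); try congruence.
      destruct (Nat.eqb_spec alpha x); congruence. }
    split; apply T_arr_i; apply T_arr_i.
    + destruct (IHA2 X G _ (HG2 (subst_ty X (ty_o o G) A1) (TArr (subst_ty X G A1) (subst_ty X G A2)))) as [H1 _].
      rewrite E2 in H1. simpl in H1.
      eapply T_arr_e; [exact H1|].
      eapply T_arr_e; [lk|].
      destruct (IHA1 X G _ (HG2 (subst_ty X (ty_o o G) A1) (TArr (subst_ty X G A1) (subst_ty X G A2)))) as [_ H2].
      rewrite E1 in H2. simpl in H2.
      eapply T_arr_e; [exact H2|lk].
    + destruct (IHA2 X G _ (HG2 (subst_ty X G A1) (TArr (subst_ty X (ty_o o G) A1) (subst_ty X (ty_o o G) A2)))) as [_ H1].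
      rewrite E2 in H1. simpl in H1.
      eapply T_arr_e; [exact H1|].
      eapply T_arr_e; [lk|].
      destruct (IHA1 X G _ (HG2 (subst_ty X G A1) (TArr (subst_ty X (ty_o o G) A1) (subst_ty X (ty_o o G) A2)))) as [H2 _].
      rewrite E1 in H2. simpl in H2.
      eapply T_arr_e; [exact H2|lk].
  - simpl in Hf.
    destruct (TT alpha x y beta g (S X) A) as [TB T'B] eqn:E.
    cbn [fst snd subst_ty]. rewrite shift_ty_o.
    split; apply T_arr_i; apply T_all_i; simpl.
    + set (Gm' := (x, TAll (shift_ty 1 (subst_ty (S X) (shift_ty 0 G) A))) :: shift_ctx Gm).
      assert (HG' : lookup alpha Gm' = Some (TConst o)).
      { unfold Gm'. simpl. destruct (Nat.eqb_spec alpha x); try congruence.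
        rewrite lookup_shift, HG. reflexivity. }
      destruct (IHA (S X) (shift_ty 0 G) Gm' HG') as [H1 _]. rewrite E in H1. simpl in H1.
      eapply T_arr_e; [exact H1|].
      pose proof (T_all_e Gm' (Var x) (shift_ty 1 (subst_ty (S X) (shift_ty 0 G) A)) (TVar 0)) as H.
      rewrite open_var_shift in H. apply H. unfold Gm'. lk.
    + set (Gm' := (x, TAll (shift_ty 1 (subst_ty (S X) (ty_o o (shift_ty 0 G)) A))) :: shift_ctx Gm).
      assert (HG' : lookup alpha Gm' = Some (TConst o)).
      { unfold Gm'. simpl. destruct (Nat.eqb_spec alpha x); try congruence.
        rewrite lookup_shift, HG. reflexivity. }
      destruct (IHA (S X) (shift_ty 0 G) Gm' HG') as [_ H1]. rewrite E in H1. simpl in H1.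
      eapply T_arr_e; [exact H1|].
      pose proof (T_all_e Gm' (Var x) (shift_ty 1 (subst_ty (S X) (ty_o o (shift_ty 0 G)) A)) (TVar 0)) as H.
      rewrite open_var_shift in H. apply H. unfold Gm'. lk.
Qed.

Theorem lemma3p1 (X : nat) (A G : ty) (o : nat) (alpha x y beta g : nat) :
  NoDup [alpha; x; y; beta; g] ->
  typing [(alpha, TConst o)] (fst (TT alpha x y beta g X A))
    (TArr (subst_ty X G A) (subst_ty X (ty_o o G) A)) /\
  typing [(alpha, TConst o)] (snd (TT alpha x y beta g X A))
    (TArr (subst_ty X (ty_o o G) A) (subst_ty X G A)).
Proof.
  intros H.
  inversion H as [|? ? Ha H1]; subst. inversion H1 as [|? ? Hx H2]; subst.
  inversion H2 as [|? ? Hy H3]; subst. inversion H3 as [|? ? Hb H4]; subst.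
  simpl in Ha, Hx, Hy, Hb.
  apply main; try (let E := fresh in intro E; subst; tauto).
  cbn -[Nat.eqb]. rewrite Nat.eqb_refl. reflexivity.
Qed.
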